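(* Let $v_3:\mathbb{P}(\mathbb{K}^2)\hookrightarrow\mathbb{P}(\operatorname{Sym}^3\mathbb{K}^2)\cong\mathbb{P}^3$ be the Veronese embedding and let $L\subseteq\mathbb{P}^3$ be a line not intersecting $v_3(\mathbb{P}^1)$. Then there exist coordinates (linear forms) $x,y$ on $\mathbb{P}^1$ and scalars $a,b\in\mathbb{K}$ such that $L$ is spanned by the two points $[x^3+ay^3]$ and $[x^3+b(x+y)^3]$.
   Context: $\mathbb{K}$ is an algebraically closed field of characteristic zero; points of $\mathbb{P}(\operatorname{Sym}^3\mathbb{K}^2)$ are identified with binary cubic forms up to scalar, and $v_3([\ell])=[\ell^3]$. *)

(* Defs.v *)
From HB Require Import structures.
From mathcomp Require Import all_boot all_order all_algebra.
Set Implicit Arguments. Unset Strict Implicit. Unset Printing Implicit Defensive.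
Import GRing.Theory.
Local Open Scope ring_scope.

(* A binary cubic form  c0 X^3 + c1 X^2 Y + c2 X Y^2 + c3 Y^3  over K is
   identified with its coefficient row vector (c0, c1, c2, c3) in 'rV[K]_4,
   i.e. Sym^3 K^2 ~ K^4. Points of P^3 are lines of K^4; a projective line
   L in P^3 is a 2-dimensional linear subspace of K^4. *)

(* Coefficient vector of the cube (u X + v Y)^3 of a linear form. *)
Definition cube (K : fieldType) (u v : K) : 'rV[K]_4 :=
  \row_(i < 4) [:: u ^+ 3; 3%:R * u ^+ 2 * v; 3%:R * u * v ^+ 2; v ^+ 3]`_i.

(* Main.v *)
Require Import Defs.
From HB Require Import structures.
From mathcomp Require Import all_boot all_order all_algebra.
From mathcomp Require Import ring zify.
From Stdlib Require Import Classical.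
Set Implicit Arguments. Unset Strict Implicit.
Import GRing.Theory.
Local Open Scope ring_scope.

Ltac fld := field; repeat (match goal with |- is_true (_ && _) => apply/andP; split end); try assumption; try exact: oner_neq0; try done.

Definition evq (K : fieldType) (a b c d u v : K) :=
  a * u^+3 + 3%:R * b * u^+2 * v + 3%:R * c * u * v^+2 + d * v^+3.
Definition duq (K : fieldType) (a b c d u v : K) :=
  3%:R * a * u^+2 + 2%:R * (3%:R * b) * u * v + 3%:R * c * v^+2.
Definition dvq (K : fieldType) (a b c d u v : K) :=
  3%:R * b * u^+2 + 2%:R * (3%:R * c) * u * v + 3%:R * d * v^+2.

Lemma quad_root (K : closedFieldType) (A B C : K) : A != 0 ->
  exists x, A * x^+2 + B * x + C = 0.
Proof.
move=> An0.
have [x Hx] := @solve_monicpoly K 2 (nth 0 [:: -(C/A); -(B/A)]) isT.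
rewrite !big_ord_recl big_ord0 /= in Hx.
by exists x; rewrite Hx; field.
Qed.

Lemma cub_root (K : closedFieldType) (A B C D : K) : A != 0 ->
  exists x, A * x^+3 + B * x^+2 + C * x + D = 0.
Proof.
move=> An0.
have [x Hx] := @solve_monicpoly K 3 (nth 0 [:: -(D/A); -(C/A); -(B/A)]) isT.
rewrite !big_ord_recl big_ord0 /= in Hx.
by exists x; rewrite Hx; field.
Qed.

Lemma lin_solve (K : fieldType) (k x e : K) : k != 0 -> k * x + e = 0 -> x = - e / k.
Proof. move=> kn0 /eqP; rewrite addr_eq0 => /eqP H; rewrite -H; by field. Qed.

Lemma ev_prop (K : fieldType) (a b c d u v u' v' : K) : (u' != 0) || (v' != 0) ->
  u * v' - v * u' = 0 -> evq a b c d u' v' = 0 -> evq a b c d u v = 0.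
Proof.
case/orP => nz D H.
  have hv : v = u * v' / u'.
    by move/eqP: D; rewrite subr_eq0 => /eqP ->; rewrite mulfK.
  transitivity ((u / u')^+3 * evq a b c d u' v'); last by rewrite H mulr0.
  by rewrite /evq hv; field.
have hu : u = v * u' / v'.
  by move/eqP: D; rewrite subr_eq0 eq_sym => /eqP ->; rewrite mulfK.
transitivity ((v / v')^+3 * evq a b c d u' v'); last by rewrite H mulr0.
by rewrite /evq hu; field.
Qed.


Lemma cubic_cases (K : closedFieldType) (n3 : 3%:R != 0 :> K) (n2 : 2%:R != 0 :> K)
  (a b c d : K) :
  (exists u1 v1 u2 v2 u3 v3 : K,
     [/\ evq a b c d u1 v1 = 0, evq a b c d u2 v2 = 0, evq a b c d u3 v3 = 0 &
      [/\ u1*v2 - v1*u2 != 0, u1*v3 - v1*u3 != 0 & u2*v3 - v2*u3 != 0]])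
  \/ (exists u v : K, [&& (u != 0) || (v != 0), evq a b c d u v == 0,
                          duq a b c d u v == 0 & dvq a b c d u v == 0]).
Proof.
case: (eqVneq a 0) => [a0|an0].
  subst a; case: (eqVneq b 0) => [b0|bn0].
    subst b; right; exists 1, 0; rewrite oner_eq0 /=.
    by apply/and3P; split; apply/eqP; rewrite /evq /duq /dvq; ring.
  have b3 : 3%:R * b != 0 by rewrite mulf_neq0.
  have [x Hx] := quad_root (3%:R * c) d b3.
  have hd : d = - (3%:R * b * x^+2 + 3%:R * c * x).
    by apply/eqP; rewrite -addr_eq0; rewrite -Hx; apply/eqP; ring.
  pose y := - (c / b) - x.
  case: (eqVneq x y) => [Hxy|Hxy].
    have E : c + 2%:R * b * x = 0.
      transitivity (c + b * (x + (- (c / b) - x))); first by rewrite -/y -Hxy; ring.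
      by fld.
    have hc := lin_solve (oner_neq0 K) (etrans (congr1 (fun z => z + _) (mul1r c)) E); rewrite divr1 in hc.
    right; exists x, 1; rewrite oner_eq0 orbT /=.
    by apply/and3P; split; apply/eqP; rewrite /evq /duq /dvq ?hd ?hc; ring.
  left; exists 1, 0, x, 1, y, 1; split.
  - by rewrite /evq; ring.
  - by rewrite /evq hd; ring.
  - by rewrite /evq /y hd; fld.
  by split; rewrite ?mul1r ?mulr1 ?mul0r ?subr0 ?oner_eq0 // subr_eq0.
have [x1 Hx1] := cub_root (3%:R * b) (3%:R * c) d an0.
have [x2 Hx2] := quad_root (3%:R * b + a * x1) (3%:R * c + 3%:R * b * x1 + a * x1^+2) an0.
have [x3 hx3] : exists x3, x3 = - ((3%:R * b + a * x1) / a) - x2 by eexists.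
have hb : b = - (a * (x1 + x2 + x3)) / 3%:R.
  by rewrite hx3; fld.
have E : 3%:R * c + - (a * (x1 * x2 + x1 * x3 + x2 * x3)) = 0.
  transitivity (a * x2^+2 + (3%:R * b + a * x1) * x2 + (3%:R * c + 3%:R * b * x1 + a * x1^+2)).
    by rewrite hx3; fld.
  exact: Hx2.
have hc := lin_solve n3 E.
have E' : 1 * d + a * x1 * x2 * x3 = 0.
  transitivity (a * x1^+3 + 3%:R * b * x1^+2 + 3%:R * c * x1 + d); last exact: Hx1.
  by rewrite hc hx3; fld.
have hd := lin_solve (oner_neq0 K) E'.
case: (eqVneq x1 x2) => [E12|N12].
  right; exists x1, 1; rewrite oner_eq0 orbT /=.
  by apply/and3P; split; apply/eqP; rewrite /evq /duq /dvq ?hd ?hc ?hb -?E12; fld.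
case: (eqVneq x1 x3) => [E13|N13].
  right; exists x1, 1; rewrite oner_eq0 orbT /=.
  by apply/and3P; split; apply/eqP; rewrite /evq /duq /dvq ?hd ?hc ?hb -?E13; fld.
case: (eqVneq x2 x3) => [E23|N23].
  right; exists x2, 1; rewrite oner_eq0 orbT /=.
  by apply/and3P; split; apply/eqP; rewrite /evq /duq /dvq ?hd ?hc ?hb -?E23; fld.
left; exists x1, 1, x2, 1, x3, 1; split.
- by rewrite /evq hd hc hb; fld.
- by rewrite /evq hd hc hb; fld.
- by rewrite /evq hd hc hb; fld.
by split; rewrite !mulr1 !mul1r subr_eq0.
Qed.

Definition detR (K : fieldType) : rel (K * K) := fun x y => x.1 * y.2 - x.2 * y.1 != 0.

Lemma pigeon (K : fieldType) (p : {poly K}) (s : seq (K*K)) :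
  p != 0 -> (size p <= 5)%N ->
  (forall z, z \in s -> z.2 != 0 -> root p (z.1 / z.2)) ->
  (6 <= size s)%N -> ~~ pairwise (@detR K) s.
Proof.
move=> pn0 sp Hr ss; apply/negP => Hpw.
pose a := (fun z : K * K => z.2 == 0).
pose rs := [seq z.1 / z.2 | z <- filter (predC a) s].
have Hu : uniq rs.
  rewrite uniq_pairwise pairwise_map.
  apply: (@sub_in_pairwise _ (predC a) (@detR K)); last first.
  - exact: pairwise_filter.
  - exact: filter_all.
  move=> x y; rewrite !inE /a => Px Py; rewrite /detR /relpre /=.
  apply: contra => /eqP E.
  have -> : x.1 * y.2 - x.2 * y.1 = x.2 * y.2 * (x.1 / x.2 - y.1 / y.2) by field; apply/andP; split.
  by rewrite E subrr mulr0.
have Hall : all (root p) rs.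
  apply/allP => r /mapP [z]; rewrite mem_filter => /andP [Pz zs] ->.
  exact: Hr.
have Hsz := max_poly_roots pn0 Hall Hu.
have Hc : (count a s <= 1)%N.
  rewrite -size_filter.
  move: (filter_all a s) (pairwise_filter a Hpw).
  case: (filter a s) => [|x [|y t]] //= /andP [/eqP x2 /andP [/eqP y2 _]].
  by rewrite /detR x2 y2 !mulr0 mul0r subrr eqxx.
have e1 : (count a s + count (predC a) s = size s)%N := count_predC a s.
have e2 : (count (predC a) s < 5)%N.
  apply: leq_trans sp; move: Hsz; by rewrite /rs size_map size_filter.
move: e1 e2 Hc ss; clear; lia.
Qed.

Ltac comp := match goal with
  | H : ?e = 0 |- _ = 0 => (transitivity e; [ring | exact H]) ||
                 (transitivity (- e); [ring | rewrite H oppr0; reflexivity]) end || ring.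

Lemma pencil (K : closedFieldType) (charK : [pchar K] =i pred0)
  (f0 f1 f2 f3 g0 g1 g2 g3 : K) :
  (forall l m : K, l * f0 + m * g0 = 0 -> l * f1 + m * g1 = 0 ->
     l * f2 + m * g2 = 0 -> l * f3 + m * g3 = 0 -> l = 0 /\ m = 0) ->
  (forall u v : K, (u != 0) || (v != 0) -> evq f0 f1 f2 f3 u v = 0 ->
     evq g0 g1 g2 g3 u v = 0 -> False) ->
  exists t u1 v1 u2 v2 u3 v3 : K,
     [/\ evq (f0 + t*g0) (f1 + t*g1) (f2 + t*g2) (f3 + t*g3) u1 v1 = 0,
         evq (f0 + t*g0) (f1 + t*g1) (f2 + t*g2) (f3 + t*g3) u2 v2 = 0,
         evq (f0 + t*g0) (f1 + t*g1) (f2 + t*g2) (f3 + t*g3) u3 v3 = 0 &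
      [/\ u1*v2 - v1*u2 != 0, u1*v3 - v1*u3 != 0 & u2*v3 - v2*u3 != 0]].
Proof.
move=> Hind Hbase.
have nat_nz : forall n, (0 < n)%N -> n%:R != 0 :> K.
  by move=> n; move/pcharf0P: charK => ->; rewrite -lt0n.
have n3 := nat_nz 3%N isT; have n2 := nat_nz 2%N isT.
have dv : forall n (x : K), (0 < n)%N -> n%:R * x = 0 -> x = 0.
  by move=> n x /nat_nz nz /eqP; rewrite mulf_eq0 (negbTE nz) => /eqP.
pose P t (z : K * K) := [&& (z.1 != 0) || (z.2 != 0),
   evq (f0 + t*g0) (f1 + t*g1) (f2 + t*g2) (f3 + t*g3) z.1 z.2 == 0,
   duq (f0 + t*g0) (f1 + t*g1) (f2 + t*g2) (f3 + t*g3) z.1 z.2 == 0 &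
   dvq (f0 + t*g0) (f1 + t*g1) (f2 + t*g2) (f3 + t*g3) z.1 z.2 == 0].
case: (classic (exists t u1 v1 u2 v2 u3 v3 : K,
     [/\ evq (f0 + t*g0) (f1 + t*g1) (f2 + t*g2) (f3 + t*g3) u1 v1 = 0,
         evq (f0 + t*g0) (f1 + t*g1) (f2 + t*g2) (f3 + t*g3) u2 v2 = 0,
         evq (f0 + t*g0) (f1 + t*g1) (f2 + t*g2) (f3 + t*g3) u3 v3 = 0 &
      [/\ u1*v2 - v1*u2 != 0, u1*v3 - v1*u3 != 0 & u2*v3 - v2*u3 != 0]]))
  => [//|Hn]; exfalso.
have Hs : forall t, exists z, P t z.
  move=> t; case: (cubic_cases n3 n2 (f0 + t*g0) (f1 + t*g1) (f2 + t*g2) (f3 + t*g3))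
    => [H|[u [v H]]]; first by case: Hn; exists t.
  by exists (u, v).
pose zf (k : nat) := xchoose (Hs k%:R).
have Pz : forall k, P k%:R (zf k) := fun k => xchooseP (Hs k%:R).
pose J (u v : K) := duq f0 f1 f2 f3 u v * dvq g0 g1 g2 g3 u v
                   - dvq f0 f1 f2 f3 u v * duq g0 g1 g2 g3 u v.
pose PJ : {poly K} := \poly_(i < 5) [:: 9%:R * (f2*g3 - f3*g2);
   18%:R * (f1*g3 - f3*g1); 9%:R * ((f0*g3 - f3*g0) + 3%:R * (f1*g2 - f2*g1));
   18%:R * (f0*g2 - f2*g0); 9%:R * (f0*g1 - f1*g0)]`_i.
have hPJ : forall x, PJ.[x] = J x 1.
  by move=> x; rewrite horner_poly !big_ord_recl big_ord0 /= /J /duq /dvq; ring.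
have PJn0 : PJ != 0.
  apply/eqP => H0.
  have c k : PJ`_k = 0 by rewrite H0 coef0.
  move: (c 0%N) (c 1%N) (c 2%N) (c 3%N) (c 4%N); rewrite !coef_poly /=.
  move=> /(dv 9%N _ isT) m23 /(dv 18%N _ isT) m13 /(dv 9%N _ isT) m2 /(dv 18%N _ isT) m02 /(dv 9%N _ isT) m01.
  have h12 : f1*g2 - f2*g1 = 0.
    have : 3%:R * (f1*g2 - f2*g1)^+2 = 0.
      transitivity ((f1*g2 - f2*g1) * ((f0*g3 - f3*g0) + 3%:R * (f1*g2 - f2*g1))
        - (f0*g2 - f2*g0) * (f1*g3 - f3*g1) + (f0*g1 - f1*g0) * (f2*g3 - f3*g2)).
        by ring.
      by rewrite m2 m02 m01 !mul0r mulr0 subr0 addr0.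
    by move/eqP; rewrite mulf_eq0 (negbTE n3) expf_eq0 /= => /eqP.
  have h03 : f0*g3 - f3*g0 = 0 by move: m2; rewrite h12 mulr0 addr0.
  have [_ F0] := Hind g0 (- f0) ltac:(comp) ltac:(comp) ltac:(comp) ltac:(comp).
  have [_ F1] := Hind g1 (- f1) ltac:(comp) ltac:(comp) ltac:(comp) ltac:(comp).
  have [_ F2] := Hind g2 (- f2) ltac:(comp) ltac:(comp) ltac:(comp) ltac:(comp).
  have [_ F3] := Hind g3 (- f3) ltac:(comp) ltac:(comp) ltac:(comp) ltac:(comp).
  move/eqP: F0; move/eqP: F1; move/eqP: F2; move/eqP: F3.
  rewrite !oppr_eq0 => /eqP e3 /eqP e2 /eqP e1 /eqP e0.
  have [h _] := Hind 1 0 ltac:(rewrite e0; ring) ltac:(rewrite e1; ring)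
                        ltac:(rewrite e2; ring) ltac:(rewrite e3; ring).
  by move/eqP: h; rewrite oner_eq0.
have Jz : forall t z, P t z -> J z.1 z.2 = 0.
  move=> t [u v] /and4P [_ _ /eqP D1 /eqP D2] /=.
  transitivity (duq (f0 + t*g0) (f1 + t*g1) (f2 + t*g2) (f3 + t*g3) u v * dvq g0 g1 g2 g3 u v
     - dvq (f0 + t*g0) (f1 + t*g1) (f2 + t*g2) (f3 + t*g3) u v * duq g0 g1 g2 g3 u v).
    by rewrite /J /duq /dvq; ring.
  by rewrite D1 D2 !mul0r subrr.
pose s := map zf (iota 0 6).
have Hnp : ~~ pairwise (@detR K) s.
  apply: (pigeon PJn0); first exact: size_poly.
    move=> [u v] /mapP [k _ Ek] /= vn0.
    have J0 : J u v = 0 by have := Jz _ _ (Pz k); rewrite -Ek.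
    rewrite /root hPJ.
    have : J (u / v) 1 * v^+4 = J u v by rewrite /J /duq /dvq; field.
    by rewrite J0 => /eqP; rewrite mulf_eq0 expf_eq0 (negbTE vn0) orbF => /eqP ->.
  by rewrite size_map size_iota.
move/negP: Hnp; apply; apply/(pairwiseP (0, 0)) => i j Hi Hj Hij.
rewrite /s size_map size_iota in Hi Hj.
rewrite !(nth_map 0%N) ?size_iota // !nth_iota //.
case: (boolP (detR (zf (0 + i)%N) (zf (0 + j)%N))) => // Hd; exfalso.
rewrite !add0n in Hd.
move: Hd; rewrite /detR negbK => /eqP Hd.
move: (Pz i) (Pz j).
case: (zf i) Hd => u v; case: (zf j) => u' v' /= Hd.
move=> /and4P [nz /eqP Ei _ _] /and4P [nz' /eqP Ej _ _].
have Ej' := ev_prop nz' Hd Ej.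
have lin : forall t, evq (f0 + t*g0) (f1 + t*g1) (f2 + t*g2) (f3 + t*g3) u v
                     = evq f0 f1 f2 f3 u v + t * evq g0 g1 g2 g3 u v.
  by move=> t; rewrite /evq; ring.
rewrite !lin in Ei Ej'.
have Eg : evq g0 g1 g2 g3 u v = 0.
  have : (j - i)%:R * evq g0 g1 g2 g3 u v = 0.
    rewrite natrB; last exact: ltnW.
    transitivity ((evq f0 f1 f2 f3 u v + j%:R * evq g0 g1 g2 g3 u v) -
                  (evq f0 f1 f2 f3 u v + i%:R * evq g0 g1 g2 g3 u v)); first by ring.
    by rewrite Ej' Ei subrr.
  by apply: dv; rewrite subn_gt0.
apply: (Hbase u v nz _ Eg).
by move: Ei; rewrite Eg mulr0 addr0.
Qed.

Definition o0 : 'I_4 := @Ordinal 4 0 isT.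
Definition o1 : 'I_4 := @Ordinal 4 1 isT.
Definition o2 : 'I_4 := @Ordinal 4 2 isT.
Definition o3 : 'I_4 := @Ordinal 4 3 isT.
Definition p0 : 'I_2 := @Ordinal 2 0 isT.
Definition p1 : 'I_2 := @Ordinal 2 1 isT.

Definition dot (K : fieldType) (x y : 'rV[K]_4) : K :=
  x 0 o0 * y 0 o0 + x 0 o1 * y 0 o1 + x 0 o2 * y 0 o2 + x 0 o3 * y 0 o3.

Lemma sum4 (V : nmodType) (F : 'I_4 -> V) : \sum_(i < 4) F i = F o0 + F o1 + F o2 + F o3.
Proof.
rewrite !big_ord_recl big_ord0 addr0 !addrA.
by congr (_ + _ + _ + _); apply: congr1; apply: val_inj.
Qed.

Lemma sum2 (V : nmodType) (F : 'I_2 -> V) : \sum_(i < 2) F i = F p0 + F p1.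
Proof.
rewrite !big_ord_recl big_ord0 addr0.
by congr (_ + _); apply: congr1; apply: val_inj.
Qed.

Lemma ord2_cases (k : 'I_2) : k = p0 \/ k = p1.
Proof. by case: k => [[|[|]]] // Hk; [left|right]; apply: val_inj. Qed.

Lemma perp (K : fieldType) (L : {vspace 'rV[K]_4}) : \dim L = 2%N ->
  exists F G : 'rV[K]_4, (forall c, c \in L <-> (dot F c = 0 /\ dot G c = 0)) /\
    (forall l m : K, l *: F + m *: G = 0 -> l = 0 /\ m = 0).
Proof.
move=> dimL.
have [s [Hs Hb]] : exists s : seq 'rV[K]_4, size s = 2%N /\ basis_of L s.
  by exists (vbasis L); split; [rewrite size_tuple dimL | exact: vbasisP].
case: s Hs Hb => [|e1 [|e2 [|]]] //= _ /andP [/eqP Hspan Hfree].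
have memL : forall c, c \in L <-> exists x y, c = x *: e1 + y *: e2.
  move=> c; rewrite -Hspan span_cons span_seq1; split.
    by move/memv_addP => [w1 /vlineP [x ->] [w2 /vlineP [y ->] ->]]; exists x, y.
  by move=> [x [y ->]]; apply: memv_add; apply/vlineP; [exists x | exists y].
have Hfr : forall x y, x *: e1 + y *: e2 = 0 -> x = 0 /\ y = 0.
  move: Hfree; rewrite free_cons seq1_free span_seq1 => /andP [Hn e2n0] x y H.
  case: (eqVneq x 0) => [x0|xn0].
    split => //; move: H; rewrite x0 scale0r add0r => /eqP.
    by rewrite scaler_eq0 (negbTE e2n0) orbF => /eqP.
  exfalso; move/negP: Hn; apply; apply/vlineP; exists (- (y / x)).
  have -> : e1 = x^-1 *: (x *: e1 + y *: e2) - (y / x) *: e2.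
    by rewrite scalerDr !scalerA mulVf // scale1r mulrC addrK.
  by rewrite H scaler0 sub0r scaleNr.
pose B : 'M[K]_(1 + 1, 4) := col_mx e1 e2.
have mulB : forall D : 'rV[K]_(1 + 1), D *m B = D 0 (lshift 1 0) *: e1 + D 0 (rshift 1 0) *: e2.
  move=> D; rewrite -{1}[D]hsubmxK mul_row_col (mx11_scalar (lsubmx D)) (mx11_scalar (rsubmx D)).
  by rewrite !mul_scalar_mx !mxE.
have subB : forall c, (c <= B)%MS <-> c \in L.
  move=> c; rewrite memL; split.
    by case/submxP => D ->; rewrite mulB; eexists; eexists.
  case=> [x [y ->]]; apply/submxP; exists (row_mx x%:M y%:M).
  by rewrite mul_row_col !mul_scalar_mx.
have rB : \rank B = 2%N.
  apply/eqP; rewrite eqn_leq rank_leq_row /= leqNgt; apply/negP => Hlt.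
  have : kermx B != 0 by rewrite -mxrank_eq0 mxrank_ker subn_eq0 -ltnNge.
  case/rowV0Pn => u /sub_kermxP Hu; apply/negP/negPn.
  rewrite mulB in Hu; have [h1 h2] := Hfr _ _ Hu.
  apply/eqP/rowP => k; rewrite mxE.
  have [->|->] : k = lshift 1 0 \/ k = rshift 1 0.
    by case: k => [[|[|]]] // Hk; [left|right]; apply: val_inj.
  - by rewrite h1.
  - by rewrite h2.
pose Pm := kermx B^T.
have rP : \rank Pm = 2%N by rewrite mxrank_ker mxrank_tr rB.
suff gen : forall m (X : 'M[K]_(m, 4)), m = 2%N -> (X :=: Pm)%MS -> row_free X ->
  exists F G : 'rV[K]_4, (forall c, c \in L <-> (dot F c = 0 /\ dot G c = 0)) /\
    (forall l m : K, l *: F + m *: G = 0 -> l = 0 /\ m = 0).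
  exact: (gen _ (row_base Pm) rP (eq_row_base Pm) (row_base_free Pm)).
move=> m X Em; subst m => eqXP rfX.
have XB : X *m B^T = 0 by apply/sub_kermxP; rewrite eqXP.
have BX : B *m X^T = 0 by rewrite -[B]trmxK -trmx_mul XB trmx0.
have Bsub : (B <= kermx X^T)%MS by apply/sub_kermxP.
have Ksub : (kermx X^T <= B)%MS.
  by rewrite -(mxrank_leqif_sup Bsub).2 rB mxrank_ker mxrank_tr (eqP rfX).
have entry : forall c k, (c *m X^T) 0 k = dot (row k X) c.
  by move=> c k; rewrite !mxE sum4 /dot !mxE; ring.
exists (row p0 X), (row p1 X); split.
  move=> c; rewrite -subB; split.
    move=> cB; have := submx_trans cB Bsub; move/sub_kermxP => H.
    by split; rewrite -entry H mxE.
  move=> [h0 h1]; apply: (submx_trans _ Ksub); apply/sub_kermxP.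
  by apply/rowP => k; rewrite entry mxE; case: (ord2_cases k) => ->.
move=> l m H.
pose u : 'rV[K]_2 := \row_(k < 2) (if k == p0 then l else m).
have : u *m X = 0 *m X.
  by rewrite mul0mx mulmx_sum_row sum2 !mxE /= -H.
move/(row_free_inj rfX) => /rowP Hu.
by move: (Hu p0) (Hu p1); rewrite !mxE /=.
Qed.


Lemma dot_cube (K : fieldType) (x : 'rV[K]_4) u v :
  dot x (cube u v) = evq (x 0 o0) (x 0 o1) (x 0 o2) (x 0 o3) u v.
Proof. by rewrite /dot /evq !mxE /=; ring. Qed.

Lemma dotDr (K : fieldType) (x y z : 'rV[K]_4) : dot x (y + z) = dot x y + dot x z.
Proof. by rewrite /dot !mxE; ring. Qed.

Lemma dotZr (K : fieldType) (x y : 'rV[K]_4) k : dot x (k *: y) = k * dot x y.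
Proof. by rewrite /dot !mxE; ring. Qed.

Lemma dot0r (K : fieldType) (x : 'rV[K]_4) : dot x 0 = 0.
Proof. by rewrite /dot !mxE; ring. Qed.

Lemma dotDl (K : fieldType) (x y z : 'rV[K]_4) t : dot (x + t *: y) z = dot x z + t * dot y z.
Proof. by rewrite /dot !mxE; ring. Qed.

Lemma hform (K : fieldType) (n3 : 3%:R != 0 :> K) (a1 a2 b1 b2 c1 c2 : K) :
  exists h : 'rV[K]_4, forall u v,
    dot h (cube u v) = (a2 * u - a1 * v) * (b2 * u - b1 * v) * (c2 * u - c1 * v).
Proof.
exists (\row_(i < 4) [:: a2 * b2 * c2;
   - (a1 * b2 * c2 + a2 * b1 * c2 + a2 * b2 * c1) / 3%:R;
   (a1 * b1 * c2 + a1 * b2 * c1 + a2 * b1 * c1) / 3%:R; - (a1 * b1 * c1)]`_i).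
by move=> u v; rewrite /dot !mxE /=; fld.
Qed.

Lemma ord4_cases (k : 'I_4) : [\/ k = o0, k = o1, k = o2 | k = o3].
Proof.
by case: k => [[|[|[|[|]]]]] // Hk; [constructor 1|constructor 2|constructor 3|constructor 4];
  apply: val_inj.
Qed.

Lemma coords (K : fieldType) (a b c d u1 v1 u2 v2 u3 v3 : K) :
  evq a b c d u1 v1 = 0 -> evq a b c d u2 v2 = 0 -> evq a b c d u3 v3 = 0 ->
  u1*v2 - v1*u2 != 0 -> u1*v3 - v1*u3 != 0 -> u2*v3 - v2*u3 != 0 ->
  exists p q r s, [/\ p*s - q*r != 0, evq a b c d p q = 0, evq a b c d r s = 0 &
                      evq a b c d (p+r) (q+s) = 0].
Proof.
move=> E1 E2 E3 D12 D13 D23.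
have [al hal] : exists al, al = (u3*v2 - v3*u2) / (u1*v2 - v1*u2) by eexists.
have [be hbe] : exists be, be = (u1*v3 - v1*u3) / (u1*v2 - v1*u2) by eexists.
have aln0 : al != 0.
  rewrite hal mulf_neq0 ?invr_eq0 //.
  have -> : u3*v2 - v3*u2 = -(u2*v3 - v2*u3) by ring.
  by rewrite oppr_eq0.
have ben0 : be != 0 by rewrite hbe mulf_neq0 ?invr_eq0.
have sc : forall k u v, evq a b c d (k * u) (k * v) = k^+3 * evq a b c d u v.
  by move=> k u v; rewrite /evq; ring.
exists (al * u1), (al * v1), (be * u2), (be * v2); split.
- have -> : al * u1 * (be * v2) - al * v1 * (be * u2) = al * be * (u1*v2 - v1*u2) by ring.
  by rewrite !mulf_neq0.
- by rewrite sc E1 mulr0.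
- by rewrite sc E2 mulr0.
have -> : al * u1 + be * u2 = u3 by rewrite hal hbe; fld.
have -> : al * v1 + be * v2 = v3 by rewrite hal hbe; fld.
exact: E3.
Qed.

Lemma nz_of_det (K : fieldType) (p q r s : K) : p*s - q*r != 0 -> (p != 0) || (q != 0).
Proof.
apply: contraR; rewrite negb_or => /andP [/negPn/eqP -> /negPn/eqP ->].
by rewrite !mul0r subrr.
Qed.


Unset Implicit Arguments.

Theorem lemma2p2 (K : closedFieldType) (charK : [pchar K] =i pred0)
  (L : {vspace 'rV[K]_4}) (dimL : \dim L = 2%N)
  (hL : forall u v : K, (u != 0) || (v != 0) -> cube u v \notin L) :
  exists p q r s a b : K,
    p * s - q * r != 0 /\
    L = span [:: cube p q + a *: cube r s;
              cube p q + b *: cube (p + r) (q + s)].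
Proof.
have n3 : 3%:R != 0 :> K by move/pcharf0P: charK => ->.
have [F [G [HL Hind]]] := perp dimL.
have Hind' : forall l m : K, l * F 0 o0 + m * G 0 o0 = 0 -> l * F 0 o1 + m * G 0 o1 = 0 ->
     l * F 0 o2 + m * G 0 o2 = 0 -> l * F 0 o3 + m * G 0 o3 = 0 -> l = 0 /\ m = 0.
  move=> l m h0 h1 h2 h3; apply: Hind; apply/rowP => k; rewrite !mxE.
  by case: (ord4_cases k) => ->.
have Hbase : forall u v : K, (u != 0) || (v != 0) ->
    evq (F 0 o0) (F 0 o1) (F 0 o2) (F 0 o3) u v = 0 ->
    evq (G 0 o0) (G 0 o1) (G 0 o2) (G 0 o3) u v = 0 -> False.
  move=> u v nz eF eG; move/negP: (hL u v nz); apply; apply/HL.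
  by rewrite !dot_cube.
have [t [u1 [v1 [u2 [v2 [u3 [v3 [E1 E2 E3 [D12 D13 D23]]]]]]]]] := pencil charK Hind' Hbase.
have [p [q [r [s [Hdet Ep Er Epr]]]]] := coords E1 E2 E3 D12 D13 D23.
have Hev : forall u v, evq (F 0 o0 + t * G 0 o0) (F 0 o1 + t * G 0 o1)
      (F 0 o2 + t * G 0 o2) (F 0 o3 + t * G 0 o3) u v = 0 ->
      dot F (cube u v) = - (t * dot G (cube u v)).
  move=> u v H; apply/eqP; rewrite -addr_eq0; apply/eqP.
  by rewrite !dot_cube -H /evq; ring.
have inL : forall c, dot F c = - (t * dot G c) -> dot G c = 0 -> c \in L.
  by move=> c hF hG; apply/HL; rewrite hF hG mulr0 oppr0.
pose c1 := cube p q; pose c2 := cube r s; pose c3 := cube (p + r) (q + s).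
have F1 := Hev _ _ Ep; have F2 := Hev _ _ Er; have F3 := Hev _ _ Epr.
have nz1 := nz_of_det Hdet.
have nz2 : (r != 0) || (s != 0).
  apply: (@nz_of_det _ r s (-p) (-q)).
  by have -> : r * - q - s * - p = p * s - q * r by ring.
have nz3 : (p + r != 0) || (q + s != 0).
  apply: (@nz_of_det _ (p + r) (q + s) p q).
  have -> : (p + r) * q - (q + s) * p = - (p * s - q * r) by ring.
  by rewrite oppr_eq0.
have g1n0 : dot G c1 != 0.
  by apply/eqP => h; move/negP: (hL _ _ nz1); apply; apply: inL.
have g2n0 : dot G c2 != 0.
  by apply/eqP => h; move/negP: (hL _ _ nz2); apply; apply: inL.
have g3n0 : dot G c3 != 0.
  by apply/eqP => h; move/negP: (hL _ _ nz3); apply; apply: inL.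
pose a := - (dot G c1 / dot G c2); pose b := - (dot G c1 / dot G c3).
exists p, q, r, s, a, b; split => //.
rewrite -/c1 -/c2 -/c3.
have w1L : c1 + a *: c2 \in L.
  apply/HL; rewrite !dotDr !dotZr F1 F2 /a; split; fld.
have w2L : c1 + b *: c3 \in L.
  apply/HL; rewrite !dotDr !dotZr F1 F3 /b; split; fld.
have [h1 Hh1] := hform n3 r s r s (p + r) (q + s).
have [h2 Hh2] := hform n3 p q p q (p + r) (q + s).
set d := p * s - q * r in Hdet.
have h1c1 : dot h1 c1 = d ^+ 3 by rewrite Hh1 /d; ring.
have h1c3 : dot h1 c3 = 0 by rewrite Hh1; ring.
have h2c1 : dot h2 c1 = 0 by rewrite Hh2; ring.
have h2c3 : dot h2 c3 = 0 by rewrite Hh2; ring.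
have h2c2 : dot h2 c2 = - d ^+ 3 by rewrite Hh2 /d; ring.
have d3 : d ^+ 3 != 0 by rewrite expf_neq0.
have Hfree : free [:: c1 + a *: c2; c1 + b *: c3].
  rewrite free_cons seq1_free span_seq1; apply/andP; split; last first.
    apply/eqP => H; have := congr1 (dot h1) H.
    by rewrite dot0r dotDr dotZr h1c1 h1c3 mulr0 addr0; apply/eqP.
  apply/negP => /vlineP [k Hk]; have := congr1 (dot h2) Hk.
  rewrite dotZr !dotDr !dotZr h2c1 h2c2 h2c3 !add0r mulr0 mulr0 => /eqP.
  rewrite mulf_eq0 !oppr_eq0 (negbTE d3) orbF mulf_eq0 invr_eq0.
  by rewrite (negbTE g1n0) (negbTE g2n0).
apply/eqP; rewrite eq_sym eqEdim; apply/andP; split.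
  apply/span_subvP => w; rewrite !inE => /orP [] /eqP -> //.
by rewrite dimL (eqP Hfree).
Qed.
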